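(* Let $b\in C^1([0,\infty))$ satisfy $b(t)>0$ for all $t\ge0$ and $\limsup_{t\to\infty}\frac{|b'(t)|}{b(t)^2}<1$. Then $$B_0:=\int_0^\infty\exp\Big(-\int_0^sb(\sigma)\,d\sigma\Big)\,ds<\infty\quad\text{and}\quad \lim_{t\to\infty}\frac{1}{b(t)}\exp\Big(-\int_0^tb(\sigma)\,d\sigma\Big)=0.$$ Assume further that $1/b\notin L^1(0,\infty)$ and that there exist $\gamma>0$ and $C>0$ with $\frac{|b'(t)|}{b(t)^2}\le C(t+1)^{-\gamma}$ for $t>0$. Then $$\lim_{t\to\infty}\frac{1}{b(t)^2(B(t)+1)}=0,\qquad\text{where } B(t)=\int_0^t\frac{d\sigma}{b(\sigma)}.$$ *)

(* Defs.v *)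
From Stdlib Require Import Reals.
From Coquelicot Require Import Coquelicot.
Open Scope R_scope.

(* b is C^1 on [0, +oo) with derivative b':
   b' is the derivative of b at every t > 0, the right derivative at 0,
   and b, b' are continuous on [0, +oo) (relative topology). *)
Definition C1_nonneg (b b' : R -> R) : Prop :=
  (forall t, 0 < t -> is_derive b t (b' t)) /\
  filterlim (fun h => (b h - b 0) / h) (at_right 0) (locally (b' 0)) /\
  (forall t, 0 <= t ->
     filterlim b (within (fun x => 0 <= x) (locally t)) (locally (b t))) /\
  (forall t, 0 <= t ->
     filterlim b' (within (fun x => 0 <= x) (locally t)) (locally (b' t))).

(* limsup_{t -> +oo} f t < c, unfolded:
   inf_T sup_{t >= T} f t < c  iff  some tail of f is bounded by some q < c. *)
Definition limsup_pinfty_lt (f : R -> R) (c : R) : Prop :=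
  exists T q, q < c /\ forall t, T <= t -> f t <= q.

(* Main.v *)
Require Import Defs.
From Stdlib Require Import Reals Lra.
From Coquelicot Require Import Coquelicot.
Open Scope R_scope.

Lemma Rmax_lip x y : Rabs (Rmax 0 y - Rmax 0 x) <= Rabs (y - x).
Proof.
  unfold Rmax; destruct (Rle_dec 0 y), (Rle_dec 0 x); unfold Rabs;
  repeat destruct Rcase_abs; lra.
Qed.

Lemma ball_R (x e y : R) : ball x e y <-> Rabs (y - x) < e.
Proof. reflexivity. Qed.

Lemma cont_ext (f : R -> R) :
  (forall t, 0 <= t -> filterlim f (within (fun x => 0 <= x) (locally t)) (locally (f t))) ->
  forall x, continuous (fun y => f (Rmax 0 y)) x.
Proof.
  intros Hf x. unfold continuous. apply filterlim_locally. intro eps.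
  specialize (Hf (Rmax 0 x) (Rmax_l 0 x)).
  apply filterlim_locally with (eps := eps) in Hf.
  destruct Hf as [d Hd]. exists d. intros y Hy.
  apply Hd. 2: apply Rmax_l.
  apply ball_R. apply ball_R in Hy. eapply Rle_lt_trans. apply Rmax_lip. exact Hy.
Qed.

Lemma mvt_ub (f df : R -> R) a c K : a <= c ->
  (forall x, a <= x <= c -> is_derive f x (df x)) ->
  (forall x, a <= x <= c -> df x <= K) -> f c - f a <= K * (c - a).
Proof.
  intros Hac Hd HK.
  destruct (MVT_gen f a c df) as [x [Hx He]].
  - intros x Hx. apply Hd. rewrite Rmin_left, Rmax_right in Hx; lra.
  - intros x Hx. rewrite Rmin_left, Rmax_right in Hx by lra.
    apply continuity_pt_filterlim. apply (ex_derive_continuous f x).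
    eexists; apply Hd; lra.
  - rewrite Rmin_left, Rmax_right in Hx by lra. rewrite He.
    apply Rmult_le_compat_r. lra. apply HK; lra.
Qed.

Lemma mvt_lb (f df : R -> R) a c K : a <= c ->
  (forall x, a <= x <= c -> is_derive f x (df x)) ->
  (forall x, a <= x <= c -> K <= df x) -> K * (c - a) <= f c - f a.
Proof.
  intros Hac Hd HK.
  destruct (MVT_gen f a c df) as [x [Hx He]].
  - intros x Hx. apply Hd. rewrite Rmin_left, Rmax_right in Hx; lra.
  - intros x Hx. rewrite Rmin_left, Rmax_right in Hx by lra.
    apply continuity_pt_filterlim. apply (ex_derive_continuous f x).
    eexists; apply Hd; lra.
  - rewrite Rmin_left, Rmax_right in Hx by lra. rewrite He.
    apply Rmult_le_compat_r. lra. apply HK; lra.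
Qed.

Lemma exp_mono x y : x <= y -> exp x <= exp y.
Proof. intros H. destruct (Req_dec x y). subst; lra. left; apply exp_increasing; lra. Qed.

Lemma is_derive_conv (f : R -> R) x l l' : l = l' -> is_derive f x l -> is_derive f x l'.
Proof. intros ->; auto. Qed.

Lemma mono_lim (f : R -> R) M : (forall x y, 0 <= x <= y -> f x <= f y) ->
  (forall x, 0 <= x -> f x <= M) ->
  exists l, (forall x, 0 <= x -> f x <= l) /\
    forall eps, 0 < eps -> exists y0, 0 <= y0 /\ forall y, y0 <= y -> l - eps < f y.
Proof.
  intros Hm HM.
  destruct (completeness (fun v => exists y, 0 <= y /\ v = f y)) as [l [Hl1 Hl2]].
  - exists M. intros v [y [Hy ->]]. auto.
  - exists (f 0), 0. split; [lra|auto].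
  - exists l. split.
    + intros x Hx. apply Hl1. exists x; auto.
    + intros eps Heps.
      destruct (Classical_Prop.classic (exists y0, 0 <= y0 /\ l - eps < f y0)) as [[y0 [H0 H1]]|Hn].
      * exists y0. split; auto. intros y Hy. specialize (Hm y0 y ltac:(lra)). lra.
      * exfalso. assert (l <= l - eps); [|lra]. apply Hl2.
        intros v [y [Hy ->]]. destruct (Rle_dec (f y) (l - eps)); auto.
        exfalso; apply Hn; exists y; split; auto; lra.
Qed.

Lemma abs_div_bound a c q : 0 < c -> Rabs a / c <= q -> - q <= a / c <= q.
Proof.
  intros Hc H. assert (Hi : 0 < / c) by (apply Rinv_0_lt_compat; auto).
  unfold Rdiv in *. unfold Rabs in H. destruct Rcase_abs; split; nra.
Qed.

Theorem lemma2p1 (b b' : R -> R)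
  (Hb : C1_nonneg b b')
  (Hpos : forall t, 0 <= t -> 0 < b t)
  (Hls : limsup_pinfty_lt (fun t => Rabs (b' t) / (b t) ^ 2) 1) :
  ex_RInt_gen (fun s => exp (- RInt b 0 s)) (at_point 0) (Rbar_locally p_infty) /\
  is_lim (fun t => / b t * exp (- RInt b 0 t)) p_infty 0 /\
  ((~ ex_RInt_gen (fun s => / b s) (at_point 0) (Rbar_locally p_infty)) ->
   (exists gamma C, 0 < gamma /\ 0 < C /\
      forall t, 0 < t -> Rabs (b' t) / (b t) ^ 2 <= C * Rpower (t + 1) (- gamma)) ->
   is_lim (fun t => / ((b t) ^ 2 * (RInt (fun s => / b s) 0 t + 1))) p_infty 0).
Proof.
  destruct Hb as [Hder [_ [Hcont _]]].
  set (bt := fun x => b (Rmax 0 x)).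
  assert (Hbt_cont : forall x, continuous bt x) by (apply cont_ext; auto).
  assert (Hbt_pos : forall x, 0 < bt x) by (intro; apply Hpos, Rmax_l).
  assert (Hbt_eq : forall x, 0 <= x -> bt x = b x)
    by (intros; unfold bt; rewrite Rmax_right; auto).
  assert (Hbt_der : forall x, 0 < x -> is_derive bt x (b' x)).
  { intros x Hx. apply is_derive_ext_loc with b; auto.
    exists (mkposreal x Hx). intros y Hy. apply ball_R in Hy. simpl in Hy.
    apply Rabs_def2 in Hy. unfold minus, plus, opp in Hy; simpl in Hy. unfold bt; rewrite Rmax_right; auto. lra. }
  set (ut := fun x => / bt x).
  assert (Hut_cont : forall x, continuous ut x).
  { intro x. apply (continuous_comp bt (fun y => / y)); auto.
    apply (ex_derive_continuous (K:=R_AbsRing) (V:=R_NormedModule) (fun y => / y)). auto_derive. specialize (Hbt_pos x); lra. }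
  assert (Hut_der : forall x, 0 < x -> is_derive ut x (- b' x / (bt x)^2)).
  { intros x Hx. apply is_derive_inv; auto. specialize (Hbt_pos x); lra. }
  set (Ft := fun y => RInt bt 0 y).
  assert (HFt_der : forall x, is_derive Ft x (bt x)).
  { intro x. apply is_derive_RInt with (a := 0); auto. apply filter_forall. intro y.
    apply RInt_correct, ex_RInt_continuous. intros; auto. }
  assert (HFt_eq : forall s, 0 <= s -> RInt b 0 s = Ft s).
  { intros s Hs. unfold Ft. apply RInt_ext. intros x Hx.
    rewrite Rmin_left in Hx by lra. rewrite Hbt_eq; auto; lra. }
  set (E := fun y => exp (- Ft y)).
  assert (HE_pos : forall x, 0 < E x) by (intro; apply exp_pos).
  assert (HE_der : forall x, is_derive E x (- bt x * E x)).
  { intro x. apply (is_derive_comp exp (fun y => - Ft y) x (exp (- Ft x)) (- bt x)).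
    apply is_derive_exp. apply (is_derive_opp Ft x (bt x)); auto. }
  assert (HE_cont : forall x, continuous E x).
  { intro x. apply (ex_derive_continuous (K:=R_AbsRing) (V:=R_NormedModule) E). eexists; apply HE_der. }
  set (IE := fun y => RInt E 0 y).
  assert (HIE_der : forall x, is_derive IE x (E x)).
  { intro x. apply is_derive_RInt with (a := 0); auto. apply filter_forall. intro y.
    apply RInt_correct, ex_RInt_continuous. intros; auto. }
  set (Bt := fun y => RInt ut 0 y).
  assert (HBt_der : forall x, is_derive Bt x (ut x)).
  { intro x. apply is_derive_RInt with (a := 0); auto. apply filter_forall. intro y.
    apply RInt_correct, ex_RInt_continuous. intros; auto. }
  assert (HFt_mono : forall x y, x <= y -> Ft x <= Ft y).
  { intros x y Hxy. assert (H := mvt_lb Ft bt x y 0 Hxy (fun z _ => HFt_der z)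
       (fun z _ => Rlt_le _ _ (Hbt_pos z))). lra. }
  assert (HE_mono : forall x y, x <= y -> E y <= E x).
  { intros x y Hxy. apply exp_mono. specialize (HFt_mono x y Hxy). lra. }
  assert (HIE_mono : forall x y, x <= y -> IE x <= IE y).
  { intros x y Hxy. assert (H := mvt_lb IE E x y 0 Hxy (fun z _ => HIE_der z)
       (fun z _ => Rlt_le _ _ (HE_pos z))). lra. }
  destruct Hls as [T [q [Hq1 HT]]].
  set (T1 := Rmax T 1).
  assert (T1ge1 : 1 <= T1) by apply Rmax_r.
  assert (HT1 : forall t, T1 <= t -> - q <= b' t / (bt t)^2 <= q).
  { intros t Ht. rewrite Hbt_eq by lra. apply abs_div_bound.
    apply pow_lt, Hpos; lra. apply HT. pose proof (Rmax_l T 1); unfold T1 in Ht; lra. }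
  assert (Hq0 : 0 <= q) by (specialize (HT1 T1 (Rle_refl _)); lra).
  set (g := fun y => E y * ut y).
  assert (Hg_der : forall x, 0 < x -> is_derive g x (- bt x * E x * ut x + E x * (- b' x / bt x ^ 2))).
  { intros x Hx. eapply is_derive_conv; [|apply (is_derive_mult E ut x); auto].
    reflexivity. intros; apply Rmult_comm. }
  set (h := fun y => g y + (1-q) * IE y).
  assert (Hh_der : forall x, 0 < x -> is_derive h x (- bt x * E x * ut x + E x * (- b' x / bt x ^ 2) + (1-q) * E x)).
  { intros x Hx. apply (is_derive_plus g (fun y => (1-q) * IE y)); auto.
    apply is_derive_scal; auto. }
  assert (Hh_mono : forall c, T1 <= c -> h c - h T1 <= 0).
  { intros c Hc. assert (H := mvt_ub h _ T1 c 0 Hc (fun z Hz => Hh_der z ltac:(lra))).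
    rewrite Rmult_0_l in H. apply H. intros x Hx.
    assert (Hbu : - bt x * E x * ut x = - E x) by (unfold ut; field; specialize (Hbt_pos x); lra).
    cbv beta. rewrite Hbu. specialize (HT1 x ltac:(lra)). specialize (HE_pos x).
    assert (- b' x / bt x ^ 2 <= q) by (unfold Rdiv in *; lra). nra. }
  assert (Hg_pos : forall x, 0 <= g x).
  { intro x. unfold g, ut. apply Rmult_le_pos. apply Rlt_le; auto.
    apply Rlt_le, Rinv_0_lt_compat; auto. }
  set (Mb := IE T1 + g T1 / (1 - q)).
  assert (HMb : forall c, 0 <= c -> IE c <= Mb).
  { intros c Hc. assert (0 <= g T1 / (1 - q)).
    { unfold Rdiv; apply Rmult_le_pos; auto. apply Rlt_le, Rinv_0_lt_compat; lra. }
    destruct (Rle_dec c T1).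
    - specialize (HIE_mono c T1 r). unfold Mb; lra.
    - specialize (Hh_mono c ltac:(lra)). unfold h in Hh_mono.
      specialize (Hg_pos c).
      apply Rmult_le_reg_l with (1 - q). lra.
      replace ((1-q) * Mb) with ((1-q) * IE T1 + g T1) by (unfold Mb; field; lra).
      lra. }
  destruct (mono_lim IE Mb) as [l [Hl1 Hl2]].
  { intros x y Hxy; apply HIE_mono; lra. }
  exact HMb.
  split.
  { exists l. apply is_RInt_gen_ext with E.
    - apply Filter_prod with (fun x => x = 0) (fun y => 0 < y).
      reflexivity. exists 0; auto. intros x y -> Hy z Hz. simpl in Hz.
      rewrite Rmin_left, Rmax_right in Hz by lra. unfold E; rewrite HFt_eq; auto; lra.
    - unfold is_RInt_gen, filterlimi, filter_le, filtermapi. intros P [eps Heps].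
      destruct (Hl2 eps (cond_pos eps)) as [y0 [Hy0 Hy0']].
      apply Filter_prod with (fun x => x = 0) (fun y => y0 < y).
      reflexivity. exists y0; auto. intros x y -> Hy. exists (IE y). split.
      + apply (RInt_correct (V:=R_CompleteNormedModule) E 0 y), ex_RInt_continuous. intros; auto.
      + apply Heps. apply ball_R. specialize (Hy0' y ltac:(lra)). specialize (Hl1 y ltac:(lra)).
        apply Rabs_def1; lra. }
  assert (Hutd_b : forall x, 0 < x -> Rabs (- b' x / bt x ^ 2) = Rabs (b' x) / (b x)^2).
  { intros x Hx. rewrite Hbt_eq by lra. unfold Rdiv. rewrite Rabs_mult, Rabs_Ropp.
    rewrite (Rabs_pos_eq (/ _)). auto. apply Rlt_le, Rinv_0_lt_compat, pow_lt, Hpos; lra. }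
  split.
  { apply is_lim_spec. intros eps. simpl.
    set (A := ut T1).
    assert (HA : 0 < A) by (apply Rinv_0_lt_compat; auto).
    set (e := eps / (A + 2*q + 1)).
    assert (He : 0 < e) by (apply Rdiv_lt_0_compat; [apply cond_pos | lra]).
    destruct (Hl2 e He) as [y0 [Hy0 Hy0']].
    exists (Rmax (2*T1) (2*y0)). intros t Ht.
    pose proof (Rmax_l (2*T1) (2*y0)). pose proof (Rmax_r (2*T1) (2*y0)).
    rewrite HFt_eq, <- Hbt_eq by lra.
    change (exp (- Ft t)) with (E t). change (/ bt t) with (ut t).
    assert (Hut : ut t - A <= q * (t - T1)).
    { apply (mvt_ub ut (fun x => - b' x / bt x ^ 2)). lra.
      intros x Hx; apply Hut_der; lra.
      intros x Hx. specialize (HT1 x ltac:(lra)). unfold Rdiv in *; lra. }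
    assert (HIEb : E t * (t - t/2) <= IE t - IE (t/2)).
    { apply (mvt_lb IE E). lra. intros; auto. intros x Hx. apply HE_mono; lra. }
    specialize (Hl1 t ltac:(lra)). specialize (Hy0' (t/2) ltac:(lra)).
    specialize (HE_pos t).
    assert (Hut0 : 0 < ut t) by (apply Rinv_0_lt_compat; auto).
    rewrite Rminus_0_r, Rabs_pos_eq by nra.
    assert (H2 : t * E t < 2*e).
    { replace (t * E t) with (2 * (E t * (t - t/2))) by field. lra. }
    assert (H1 : E t < e).
    { assert (0 <= (t-2) * E t) by (apply Rmult_le_pos; lra). lra. }
    assert (H3 : ut t * E t <= A * E t + q * (t * E t)).
    { assert (0 <= q * T1) by (apply Rmult_le_pos; lra).
      assert (0 <= (A + q*t - ut t) * E t) by (apply Rmult_le_pos; lra). lra. }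
    assert (H4 : q * (t * E t) <= q * (2*e)) by (apply Rmult_le_compat_l; lra).
    assert (H5 : A * E t <= A * e) by (apply Rmult_le_compat_l; lra).
    assert (H6 : pos eps = e * (A + 2*q + 1)) by (unfold e; field; lra).
    rewrite H6. nra. }
  intros _ [gam [C [Hgam [HC Hbnd]]]].
  set (K := fun s => C * Rpower (s+1) (-gam)).
  assert (HK_pos : forall s, 0 < K s).
  { intro s. unfold K, Rpower. apply Rmult_lt_0_compat; [lra | apply exp_pos]. }
  assert (HK_dec : forall s s', 0 <= s <= s' -> K s' <= K s).
  { intros s s' Hs. unfold K, Rpower. apply Rmult_le_compat_l; [lra|]. apply exp_mono.
    assert (ln (s+1) <= ln (s'+1)) by (apply ln_le; lra). nra. }
  assert (HK_small : forall eta, 0 < eta -> exists S, forall s, S <= s -> K s <= eta).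
  { intros eta Heta. exists (exp (- ln (eta / C) / gam)). intros s Hs.
    unfold K, Rpower.
    assert (Hs1 : 0 < exp (- ln (eta / C) / gam)) by apply exp_pos.
    assert (Hl : ln (exp (- ln (eta / C) / gam)) <= ln (s+1)) by (apply ln_le; lra).
    rewrite ln_exp in Hl.
    assert (Ha : - ln (eta / C) <= gam * ln (s + 1)).
    { replace (- ln (eta / C)) with (gam * (- ln (eta / C) / gam)) by (field; lra).
      apply Rmult_le_compat_l; lra. }
    assert (Hb2 : exp (- gam * ln (s + 1)) <= eta / C).
    { rewrite <- (exp_ln (eta / C)) by (apply Rdiv_lt_0_compat; lra).
      apply exp_mono. lra. }
    replace eta with (C * (eta / C)) by (field; lra).
    apply Rmult_le_compat_l; lra. }
  assert (Hud : forall x, 0 < x -> - K x <= - b' x / bt x ^ 2 <= K x).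
  { intros x Hx. specialize (Hbnd x Hx). rewrite <- Hutd_b in Hbnd by auto.
    revert Hbnd. unfold K. generalize (- b' x / bt x ^ 2). intros r Hr.
    unfold Rabs in Hr. destruct Rcase_abs; lra. }
  assert (Hut_pos : forall x, 0 < ut x) by (intro; apply Rinv_0_lt_compat; auto).
  assert (HBt0 : Bt 0 = 0) by (exact (RInt_point (V:=R_CompleteNormedModule) 0 ut)).
  assert (HBt_pos : forall t, 0 <= t -> 0 <= Bt t).
  { intros t Ht. assert (H := mvt_lb Bt ut 0 t 0 Ht (fun z _ => HBt_der z)
       (fun z _ => Rlt_le _ _ (Hut_pos z))). lra. }
  assert (HcA : forall e, 0 < e -> exists M, forall t, M < t -> ut t <= e * t).
  { intros e He. destruct (HK_small (e/2) ltac:(lra)) as [S HS].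
    pose proof (Rmax_l 1 S). pose proof (Rmax_r 1 S). set (T0 := Rmax 1 S) in *.
    exists (Rmax T0 (2 * ut T0 / e)). intros t Ht.
    pose proof (Rmax_l T0 (2 * ut T0 / e)). pose proof (Rmax_r T0 (2 * ut T0 / e)).
    assert (Hm : ut t - ut T0 <= e/2 * (t - T0)).
    { apply (mvt_ub ut (fun x => - b' x / bt x ^ 2)). fold T0; lra.
      intros x Hx; apply Hut_der; lra.
      intros x Hx. specialize (Hud x ltac:(lra)). specialize (HS x ltac:(lra)). lra. }
    assert (Hm2 : e * (2 * ut T0 / e) < e * t) by (apply Rmult_lt_compat_l; lra).
    replace (e * (2 * ut T0 / e)) with (2 * ut T0) in Hm2 by (field; lra).
    assert (0 <= e * T0) by (apply Rmult_le_pos; lra).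
    lra. }
  assert (HcB : forall t, 0 < t -> ut t ^ 2 <= (4 * K (t/2) + 4 * ut t / t) * (Bt t + 1)).
  { intros t Ht. set (U := ut t). set (k := K (t/2)).
    assert (HU : 0 < U) by apply Hut_pos. assert (Hk : 0 < k) by apply HK_pos.
    set (d := Rmin (t/2) (U/(2*k))).
    assert (Hd1 : d <= t/2) by apply Rmin_l.
    assert (Hd2 : d <= U/(2*k)) by apply Rmin_r.
    assert (Hd0 : 0 < d).
    { apply Rmin_glb_lt. lra. apply Rdiv_lt_0_compat; lra. }
    assert (Hkd : k * d <= U / 2).
    { replace (U/2) with (k * (U/(2*k))) by (field; lra). apply Rmult_le_compat_l; lra. }
    assert (Hlow : forall s, t - d <= s <= t -> U/2 <= ut s).
    { intros s Hs. assert (H := mvt_ub ut (fun x => - b' x / bt x ^ 2) s t k ltac:(lra)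
        (fun x Hx => Hut_der x ltac:(lra))).
      assert (U - ut s <= k * (t - s)).
      { apply H. intros x Hx. specialize (Hud x ltac:(lra)).
        specialize (HK_dec (t/2) x ltac:(lra)). fold k in HK_dec. lra. }
      assert (k * (t - s) <= k * d) by (apply Rmult_le_compat_l; lra). lra. }
    assert (HB1 := mvt_lb Bt ut (t-d) t (U/2) ltac:(lra) (fun z _ => HBt_der z) Hlow).
    pose proof (HBt_pos (t - d) ltac:(lra)). pose proof (HBt_pos t ltac:(lra)).
    assert (HBd : U * d / 2 <= Bt t) by lra.
    assert (0 <= 4 * k * (Bt t + 1)) by (apply Rmult_le_pos; lra).
    assert (0 <= 4 * U / t * (Bt t + 1)).
    { apply Rmult_le_pos; [|lra]. apply Rmult_le_pos. lra. apply Rlt_le, Rinv_0_lt_compat; lra. }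
    unfold d, Rmin in HBd. destruct (Rle_dec (t/2) (U/(2*k))).
    - assert (Hc : 4 * U / t * (U * (t / 2) / 2) <= 4 * U / t * (Bt t + 1)).
      { apply Rmult_le_compat_l; [|lra]. apply Rmult_le_pos. lra. apply Rlt_le, Rinv_0_lt_compat; lra. }
      replace (4 * U / t * (U * (t / 2) / 2)) with (U ^ 2) in Hc by (field; lra).
      lra.
    - assert (Hc : 4 * k * (U * (U / (2 * k)) / 2) <= 4 * k * (Bt t + 1)).
      { apply Rmult_le_compat_l; lra. }
      replace (4 * k * (U * (U / (2 * k)) / 2)) with (U ^ 2) in Hc by (field; lra).
      lra. }
  apply is_lim_spec. intros eps. simpl.
  pose proof (cond_pos eps) as Heps.
  destruct (HK_small (eps/16) ltac:(lra)) as [S1 HS1].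
  destruct (HcA (eps/16) ltac:(lra)) as [M HM].
  exists (Rmax (2*S1) (Rmax M 1)). intros t Ht.
  pose proof (Rmax_l (2*S1) (Rmax M 1)). pose proof (Rmax_r (2*S1) (Rmax M 1)).
  pose proof (Rmax_l M 1). pose proof (Rmax_r M 1).
  assert (HRI : RInt (fun s => / b s) 0 t = Bt t).
  { unfold Bt. apply RInt_ext. intros x Hx. rewrite Rmin_left in Hx by lra.
    unfold ut; rewrite Hbt_eq; auto; lra. }
  rewrite HRI, <- Hbt_eq by lra.
  specialize (HBt_pos t ltac:(lra)). specialize (Hbt_pos t).
  assert (Hv : / (bt t * (bt t * 1) * (Bt t + 1)) = ut t ^ 2 / (Bt t + 1)).
  { unfold ut. field. lra. }
  rewrite Hv, Rminus_0_r.
  assert (Hv0 : 0 <= ut t ^ 2 / (Bt t + 1)).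
  { apply Rmult_le_pos. apply pow2_ge_0. apply Rlt_le, Rinv_0_lt_compat; lra. }
  rewrite Rabs_pos_eq by auto.
  specialize (HcB t ltac:(lra)). specialize (HS1 (t/2) ltac:(lra)). specialize (HM t ltac:(lra)).
  assert (H4 : 4 * ut t / t <= eps / 4).
  { apply Rle_div_l. lra. lra. }
  apply Rle_lt_trans with (4 * K (t / 2) + 4 * ut t / t).
  apply Rle_div_l. lra. lra. lra.
Qed.
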